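(* As formal power series in $y$ with coefficients in $\mathbb{Q}(x)$, $$\sum_{n=0}^{\infty}H_n(x)y^n=\frac{1-xy(1+y-y^2)}{(1-y)(1-xy)(1-xy-2xy^2)}.$$ In particular, for every $n\geq 0$, $$H_n(x)=\frac{1}{1-3x}+\frac{1}{2}x^n+h_n(x),\qquad h_n(x)=\frac{(\sqrt{2x}\,\mathrm{i})^{n}}{2(1-3x)}\left(8T_n\!\left(-\frac{\sqrt{2x}\,\mathrm{i}}{4}\right)-3(x+3)U_n\!\left(-\frac{\sqrt{2x}\,\mathrm{i}}{4}\right)\right),$$ where $\mathrm{i}^2=-1$ and $T_n$, $U_n$ are the Chebyshev polynomials of the first and second kind (the expressions $(\sqrt{2x}\,\mathrm{i})^nT_n(-\sqrt{2x}\,\mathrm{i}/4)$ and $(\sqrt{2x}\,\mathrm{i})^nU_n(-\sqrt{2x}\,\mathrm{i}/4)$ are polynomials in $x$, so this is an identity of rational functions in $x$).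
   Context: The Stern polynomials $B_n(t)\in\mathbb{Z}[t]$ are defined by $B_0(t)=0$, $B_1(t)=1$, and for $n\geq 1$: $B_{2n}(t)=tB_n(t)$, $B_{2n+1}(t)=B_n(t)+B_{n+1}(t)$. For $n\geq1$ let $e(n)=\deg B_n(t)$, and for $n\ge 0$ let $H_n(x)=\sum_{m=1}^{2^n}x^{e(m)}$. Chebyshev polynomials: $T_n(\cos\theta)=\cos(n\theta)$, $U_n(\cos\theta)=\sin((n+1)\theta)/\sin\theta$; equivalently $\sum_n T_n(a)z^n=(1-az)/(1-2az+z^2)$ and $\sum_n U_n(a)z^n=1/(1-2az+z^2)$. *)

(* Defs.v *)
From HB Require Import structures.
From mathcomp Require Import all_boot all_order all_algebra all_field.
Set Implicit Arguments. Unset Strict Implicit. Unset Printing Implicit Defensive.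
Import Order.TTheory GRing.Theory Num.Theory.
Local Open Scope ring_scope.

Fixpoint stern_aux (k n : nat) : {poly int} :=
  match k with
  | 0 => 0
  | k.+1 =>
    if n == 0%N then 0
    else if n == 1%N then 1
    else if odd n then stern_aux k n./2 + stern_aux k n./2.+1
    else 'X * stern_aux k n./2
  end.

Definition stern (n : nat) : {poly int} := stern_aux n n.

Definition sdeg (n : nat) : nat := (size (stern n)).-1.

Definition Hpoly (n : nat) : {poly int} :=
  \sum_(1 <= m < (2 ^ n).+1) 'X^(sdeg m).

Fixpoint cheb_pair (R : nzRingType) (a0 a1 : {poly R}) (n : nat)
  : {poly R} * {poly R} :=
  match n with
  | 0 => (a0, a1)
  | n.+1 => let: (p, q) := cheb_pair a0 a1 n in (q, 2%:R *: 'X * q - p)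
  end.

Definition chebT (R : nzRingType) (n : nat) : {poly R} :=
  (cheb_pair 1 'X n).1.
Definition chebU (R : nzRingType) (n : nat) : {poly R} :=
  (cheb_pair 1 (2%:R *: 'X) n).1.

(* Bivariate setting: outer variable y = 'X, inner variable x = 'X%:P. *)
Definition yv : {poly {poly rat}} := 'X.
Definition xv : {poly {poly rat}} := ('X : {poly rat})%:P.

Definition HQ (n : nat) : {poly rat} := map_poly (intr : int -> rat) (Hpoly n).

Definition Hseries (N : nat) : {poly {poly rat}} :=
  \sum_(n < N.+1) (HQ n)%:P * yv ^+ n.

Definition gf_num : {poly {poly rat}} := 1 - xv * yv * (1 + yv - yv ^+ 2).
Definition gf_den : {poly {poly rat}} :=
  (1 - yv) * (1 - xv * yv) * (1 - xv * yv - 2%:R * xv * yv ^+ 2).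

Definition hn (n : nat) (x : algC) : algC :=
  let s := sqrtC (2%:R * x) * 'i in
  let a := - s / 4%:R in
  s ^+ n / (2%:R * (1 - 3%:R * x)) *
    (8%:R * (chebT algC n).[a] - 3%:R * (x + 3%:R) * (chebU algC n).[a]).

(* Main.v *)
Require Import Defs.
From HB Require Import structures.
From mathcomp Require Import all_boot all_order all_algebra all_field.
From mathcomp Require Import zify ring.
Import Order.TTheory GRing.Theory Num.Theory.
Local Open Scope ring_scope.

Lemma stern_aux_indep k1 k2 n : (n <= k1)%N -> (n <= k2)%N ->
  stern_aux k1 n = stern_aux k2 n.
Proof.
elim: k1 k2 n => [|k1 IH] [|k2] n /=; rewrite ?leqn0.
- by [].
- by move=> /eqP -> .
- by move=> _ /eqP ->.
move=> h1 h2.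
case: eqP => // /eqP n0; case: eqP => // /eqP n1.
have n2 : (2 <= n)%N by case: n n0 n1 {h1 h2} => [|[|n]].
case: ifP => on.
- have a : (n./2.+1 <= k1)%N.
    rewrite -ltnS; apply: leq_trans h1; rewrite -(odd_double_half n) on.
    move: n2; rewrite -(odd_double_half n) on; case: (n./2) => [|m] //=; lia.
  have b : (n./2.+1 <= k2)%N.
    rewrite -ltnS; apply: leq_trans h2; rewrite -(odd_double_half n) on.
    move: n2; rewrite -(odd_double_half n) on; case: (n./2) => [|m] //=; lia.
  by rewrite (IH k2 n./2) ?(IH k2 n./2.+1) //; apply: ltnW.
- have a : (n./2 <= k1)%N.
    rewrite -ltnS; apply: leq_trans h1; rewrite -(odd_double_half n) on.
    move: n2; rewrite -(odd_double_half n) on; case: (n./2) => [|m] //=; lia.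
  have b : (n./2 <= k2)%N.
    rewrite -ltnS; apply: leq_trans h2; rewrite -(odd_double_half n) on.
    move: n2; rewrite -(odd_double_half n) on; case: (n./2) => [|m] //=; lia.
  by rewrite (IH k2 n./2).
Qed.

Lemma stern_auxS k n : stern_aux k.+1 n = if n == 0%N then 0 else if n == 1%N then 1
  else if odd n then stern_aux k n./2 + stern_aux k n./2.+1 else 'X * stern_aux k n./2.
Proof. by []. Qed.

Lemma sternE n : stern n = stern_aux n.+1 n.
Proof. by apply: stern_aux_indep. Qed.

Lemma stern_even n : (0 < n)%N -> stern n.*2 = 'X * stern n.
Proof.
move=> n0; rewrite sternE stern_auxS.
have -> : (n.*2 == 0%N) = false by lia.
have -> : (n.*2 == 1%N) = false by lia.
rewrite odd_double doubleK /stern; congr (_ * _); apply: stern_aux_indep; lia.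
Qed.

Lemma stern_odd n : (0 < n)%N -> stern n.*2.+1 = stern n + stern n.+1.
Proof.
move=> n0; rewrite sternE stern_auxS.
have -> : (n.*2.+1 == 0%N) = false by lia.
have -> : (n.*2.+1 == 1%N) = false by lia.
have -> : odd n.*2.+1 = true by rewrite /= odd_double.
have -> : (n.*2.+1)./2 = n := uphalf_double n.
by rewrite /stern; congr (_ + _); apply: stern_aux_indep; lia.
Qed.

Lemma stern1 : stern 1 = 1. Proof. by []. Qed.

Definition nonneg (p : {poly int}) := forall i, 0 <= p`_i.

Lemma size_add_nonneg (p q : {poly int}) : nonneg p -> nonneg q ->
  size (p + q) = maxn (size p) (size q).
Proof.
move=> hp hq; apply/eqP; rewrite eqn_leq size_polyD /=.
have key : forall (a b : {poly int}), nonneg a -> nonneg b ->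
    (size a <= size (a + b)%R)%N.
  move=> a b ha hb; case: (eqVneq a 0) => [->|a0]; first by rewrite size_poly0.
  have sa := polySpred a0.
  rewrite sa; case: leqP => // hlt.
  have : (a + b)`_(size a).-1 = 0 by rewrite nth_default //; lia.
  rewrite coefD => h.
  have la : lead_coef a != 0 by rewrite lead_coef_eq0.
  move: la; rewrite lead_coefE.
  have := ha (size a).-1; have := hb (size a).-1; move: h.
  set u := a`_(size a).-1; set v := b`_(size a).-1; move=> h h1 h2 h3.
  have : u = 0 by lia.
  by move/eqP; rewrite (negbTE h3).
by rewrite geq_max key // addrC key.
Qed.

Lemma nonnegD p q : nonneg p -> nonneg q -> nonneg (p + q).
Proof. by move=> hp hq i; rewrite coefD addr_ge0. Qed.

Lemma nonnegX p : nonneg p -> nonneg ('X * p).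
Proof. by move=> hp i; rewrite coefXM; case: eqP. Qed.

Lemma nat_cases n : (1 < n)%N ->
  (exists2 m, (0 < m)%N & n = m.*2) \/ (exists2 m, (0 < m)%N & n = m.*2.+1).
Proof.
move=> n1; rewrite -(odd_double_half n); case: (odd n) => /=; [right|left];
  exists n./2 => //; move: n1; rewrite -{1}(odd_double_half n); case: (odd n) => /=; lia.
Qed.

Lemma stern_pos n : (0 < n)%N -> stern n != 0 /\ nonneg (stern n).
Proof.
elim/ltn_ind: n => n IH n0.
case: (eqVneq n 1%N) => [->|n1].
  by rewrite stern1; split; [exact: oner_neq0| move=> [|[|i]]; rewrite coefC].
have n1' : (1 < n)%N by lia.
have [[m m0 hn]|[m m0 hn]] := nat_cases n n1'; subst n.
- have [h1 h2] : stern m != 0 /\ nonneg (stern m) by apply: IH => //; lia.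
  rewrite stern_even //; split; last exact: nonnegX.
  by rewrite mulf_neq0 // polyX_eq0.
- have [h1 h2] : stern m != 0 /\ nonneg (stern m) by apply: IH => //; lia.
  have [h3 h4] : stern m.+1 != 0 /\ nonneg (stern m.+1) by apply: IH => //; lia.
  rewrite stern_odd //; split; last exact: nonnegD.
  by rewrite -size_poly_gt0 size_add_nonneg // leq_max size_poly_gt0 h1.
Qed.

Definition e := sdeg.

Lemma e1 : e 1 = 0%N.
Proof. by rewrite /e /sdeg stern1 size_poly1. Qed.

Lemma e_even m : (0 < m)%N -> e m.*2 = (e m).+1.
Proof.
move=> m0; rewrite /e /sdeg stern_even // mulrC size_mulX; last by case: (stern_pos _ m0).
by have [h _] := stern_pos _ m0; rewrite -size_poly_gt0 in h; lia.
Qed.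

Lemma e_odd m : (0 < m)%N -> e m.*2.+1 = maxn (e m) (e m.+1).
Proof.
move=> m0; rewrite /e /sdeg stern_odd //.
have [h1 h2] := stern_pos _ m0; have [h3 h4] := stern_pos _ (ltn0Sn m).
rewrite size_add_nonneg //.
rewrite -size_poly_gt0 in h1; rewrite -size_poly_gt0 in h3; lia.
Qed.

Lemma e_lip k : (0 < k)%N -> (e k.+1 <= (e k).+1)%N /\ (e k <= (e k.+1).+1)%N.
Proof.
elim/ltn_ind: k => k IH k0.
case: (eqVneq k 1%N) => [->|k1].
  by rewrite -[2%N]/(1.*2) e_even // e1.
have k1' : (1 < k)%N by lia.
have [[m m0 hn]|[m m0 hn]] := nat_cases k k1'; subst k.
  have [h1 h2] : (e m.+1 <= (e m).+1)%N /\ (e m <= (e m.+1).+1)%N by apply: IH => //; lia.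
  rewrite e_odd // e_even //; lia.
  have [h1 h2] : (e m.+1 <= (e m).+1)%N /\ (e m <= (e m.+1).+1)%N by apply: IH => //; lia.
  rewrite -doubleS e_odd // e_even //; lia.
Qed.

Lemma e_pow n : e (2 ^ n) = n.
Proof.
elim: n => [|n IH]; first exact: e1.
by rewrite expnS mul2n e_even ?IH // expn_gt0.
Qed.

Definition f N : {poly int} := \sum_(1 <= m < N.+1) 'X^(e m).
Definition P N : {poly int} := \sum_(1 <= k < N) 'X^(maxn (e k) (e k.+1)).

Lemma f0 : f 0 = 0. Proof. by rewrite /f big_geq. Qed.
Lemma fS N : f N.+1 = f N + 'X^(e N.+1).
Proof. by rewrite /f big_nat_recr. Qed.
Lemma P1 : P 1 = 0. Proof. by rewrite /P big_geq. Qed.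
Lemma PS N : (0 < N)%N -> P N.+1 = P N + 'X^(maxn (e N) (e N.+1)).
Proof. by move=> N0; rewrite /P big_nat_recr. Qed.

Lemma e2 : e 2 = 1%N. Proof. by rewrite -[2%N]/(1.*2) e_even // e1. Qed.

Lemma fA N : (0 < N)%N -> f N.*2 = 'X * f N + 1 + P N.
Proof.
elim: N => [|N IH] // _.
case: N IH => [|N] IH.
  rewrite (fS 1) (fS 0) f0 P1 e1 e2 expr1 expr0; ring.
rewrite doubleS (fS (N.+1.*2).+1) (fS (N.+1.*2)) IH // (PS N.+1) // (e_odd N.+1) // -(doubleS N.+1) (e_even N.+2) // (exprS _ (e N.+2)) (fS N.+1).
set a := GRing.exp _ (maxn _ _); set b := GRing.exp _ (e N.+2); ring.
Qed.

Lemma fB N : P N.+1.*2 = 'X * f N + 'X * f N.+1.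
Proof.
elim: N => [|N IH].
  rewrite (PS 1) // P1 (fS 0) f0 e1 e2 /maxn /= expr1 expr0; ring.
rewrite (doubleS N.+1) (PS (N.+1.*2).+1) // (PS (N.+1.*2)) // IH.
have [l1 l2] := e_lip N.+1 (ltn0Sn _).
rewrite (e_even N.+1) // (e_odd N.+1) // -(doubleS N.+1) (e_even N.+2) //.
have -> : maxn (e N.+1).+1 (maxn (e N.+1) (e N.+2)) = (e N.+1).+1 by lia.
have -> : maxn (maxn (e N.+1) (e N.+2)) (e N.+2).+1 = (e N.+2).+1 by lia.
rewrite (fS N.+1) (exprS _ (e N.+1)) (exprS _ (e N.+2)).
set a := GRing.exp _ (e N.+1); set b := GRing.exp _ (e N.+2). rewrite (fS N) -/a; ring.
Qed.

Lemma Hpoly_f n : Hpoly n = f (2 ^ n). Proof. by []. Qed.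

Lemma Hrec n : Hpoly n.+2 = 'X * Hpoly n.+1 + 2%:R * 'X * Hpoly n + 1 - 'X^(n.+1).
Proof.
rewrite !Hpoly_f !expnS !mul2n.
have p0 : (0 < 2 ^ n)%N by rewrite expn_gt0.
have hs := e_pow n.
move: p0 hs; case: (2 ^ n)%N => [|s] // _ hs.
rewrite fA // (fB s) (fS s) hs exprS.
set a := GRing.exp _ n; ring.
Qed.

Lemma H0 : Hpoly 0 = 1.
Proof. by rewrite Hpoly_f expn0 (fS 0) f0 e1 expr0 add0r. Qed.

Lemma H1 : Hpoly 1 = 1 + 'X.
Proof. by rewrite Hpoly_f expn1 (fS 1) (fS 0) f0 e1 e2 expr0 expr1 add0r. Qed.

Lemma HQrec n : HQ n.+2 = 'X * HQ n.+1 + 2%:R * 'X * HQ n + 1 - 'X^(n.+1).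
Proof.
have hX : map_poly (intr : int -> rat) 'X = 'X by rewrite map_polyX.
rewrite /HQ Hrec.
rewrite !(rmorphB, rmorphD, rmorphM, rmorph1, rmorph_nat, rmorphXn) /= hX.
set a := map_poly _ (Hpoly n.+1); set b := map_poly _ (Hpoly n); set c := GRing.exp _ n.+1; ring.
Qed.

Lemma HQ0 : HQ 0 = 1.
Proof. by rewrite /HQ H0 rmorph1. Qed.

Lemma HQ1 : HQ 1 = 1 + 'X.
Proof.
have hX : map_poly (intr : int -> rat) 'X = 'X by rewrite map_polyX.
by rewrite /HQ H1 rmorphD rmorph1 /= hX.
Qed.

Lemma coefH N i : (Hseries N)`_i = if (i <= N)%N then HQ i else 0.
Proof.
elim: N => [|N IH].
  rewrite /Hseries big_ord1 coefCM /yv coefXn /= leqn0.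
  by case: eqP => [->|]; rewrite ?mulr1 ?mulr0.
rewrite /Hseries big_ord_recr /= -/(Hseries N) coefD coefCM /yv coefXn IH.
case: (ltnP i N.+1) => h.
  have h' : (i <= N)%N by [].
  by rewrite h' (leqW h') (_ : (i == N.+1) = false) ?mulr0 ?addr0 //; lia.
case: (eqVneq i N.+1) => [->|hn].
  by rewrite ltnn ltnSn mulr1 add0r.
have h1 : (i <= N)%N = false by rewrite leqNgt h.
have h2 : (i <= N.+1)%N = false by rewrite leqNgt ltn_neqAle eq_sym hn h.
by rewrite h1 h2 mulr0 addr0.
Qed.

Lemma coefH' N i : (i <= N)%N -> (Hseries N)`_i = HQ i.
Proof. by move=> h; rewrite coefH h. Qed.

Lemma den_exp : gf_den = 1%:P * yv ^+ 0 + (-(1 + 2%:R * 'X))%:P * yv ^+ 1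
  + ('X ^+ 2)%:P * yv ^+ 2 + (2%:R * 'X + 'X ^+ 2)%:P * yv ^+ 3
  + (-(2%:R * 'X ^+ 2))%:P * yv ^+ 4.
Proof.
rewrite /gf_den /xv.
rewrite !(polyCN, polyCD, polyCM, polyC_exp, polyC_natr).
set X := ('X : {poly rat})%:P; set Y := yv; ring.
Qed.

Lemma num_exp : gf_num = 1%:P * yv ^+ 0 + (- 'X)%:P * yv ^+ 1
  + (- 'X)%:P * yv ^+ 2 + ('X)%:P * yv ^+ 3.
Proof.
rewrite /gf_num /xv.
rewrite !(polyCN, polyCD, polyCM, polyC_exp, polyC_natr).
set X := ('X : {poly rat})%:P; set Y := yv; ring.
Qed.

Lemma coefCXS (c : {poly rat}) i S k :
  (c%:P * yv ^+ i * S)`_k = if (i <= k)%N then c * S`_(k - i) else 0.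
Proof. by rewrite -mulrA coefCM /yv coefXnM; case: (ltnP k i) => _; rewrite ?mulr0. Qed.

Lemma coefCX (c : {poly rat}) i k :
  (c%:P * yv ^+ i)`_k = if k == i then c else 0.
Proof. by rewrite coefCM /yv coefXn; case: eqP; rewrite ?mulr1 ?mulr0. Qed.

Lemma part1 N k : (k <= N)%N -> (gf_den * Hseries N)`_k = gf_num`_k.
Proof.
move=> hk; rewrite den_exp num_exp !mulrDl !coefD !coefCXS !coefCX.
case: k hk => [|[|[|[|m]]]] hk /=; rewrite ?subSS ?subn0.
- by rewrite coefH' // HQ0; ring.
- rewrite !coefH' ?HQ0 ?HQ1 //; try lia; ring.
- rewrite !coefH' ?(HQrec 0) ?HQ0 ?HQ1 //; try lia; ring.
- rewrite !coefH' ?(HQrec 1) ?(HQrec 0) ?HQ0 ?HQ1 //; try lia; ring.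
rewrite !coefH'; try lia.
rewrite (HQrec m.+2) (HQrec m.+1) (HQrec m) !exprS.
set a := HQ m.+1; set b := HQ m; set c := GRing.exp _ m; ring.
Qed.



Lemma cheb_pairS (R : nzRingType) (a0 a1 : {poly R}) n :
  cheb_pair a0 a1 n.+1 = ((cheb_pair a0 a1 n).2,
     2%:R *: 'X * (cheb_pair a0 a1 n).2 - (cheb_pair a0 a1 n).1).
Proof. by rewrite /=; case: (cheb_pair a0 a1 n). Qed.

Lemma chebT_rec (R : nzRingType) n :
  chebT R n.+2 = 2%:R *: 'X * chebT R n.+1 - chebT R n.
Proof. by rewrite /chebT !cheb_pairS. Qed.

Lemma chebU_rec (R : nzRingType) n :
  chebU R n.+2 = 2%:R *: 'X * chebU R n.+1 - chebU R n.
Proof. by rewrite /chebU !cheb_pairS. Qed.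

Lemma chebT_ev (R : comNzRingType) n (a : R) :
  (chebT R n.+2).[a] = 2%:R * a * (chebT R n.+1).[a] - (chebT R n).[a].
Proof. by rewrite chebT_rec hornerD hornerN hornerM hornerZ hornerX. Qed.

Lemma chebU_ev (R : comNzRingType) n (a : R) :
  (chebU R n.+2).[a] = 2%:R * a * (chebU R n.+1).[a] - (chebU R n).[a].
Proof. by rewrite chebU_rec hornerD hornerN hornerM hornerZ hornerX. Qed.

Lemma hn_rec n x : 1 - 3%:R * x != 0 -> hn n.+2 x = x * hn n.+1 x + 2%:R * x * hn n x.
Proof.
move=> hx0.
rewrite /hn; cbv zeta.
rewrite chebT_ev chebU_ev.
set s := sqrtC _ * 'i.
have hs : s ^+ 2 = - (2%:R * x) by rewrite exprMn sqrtCK sqrCi mulrN1.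
set t0 := (chebT algC n).[_]; set t1 := (chebT algC n.+1).[_].
set u0 := (chebU algC n).[_]; set u1 := (chebU algC n.+1).[_].
clearbody t0 t1 u0 u1.
rewrite !exprS.
set q := s ^+ n.
clearbody q s.
have hx : x = - (s ^+ 2) / 2%:R by rewrite hs opprK mulrC mulKf // pnatr_eq0.
move: hx0; rewrite hx => hx0.
field.
have -> : 2%:R - 3%:R * - s ^+ 2 = 2%:R * (1 - 3%:R * (- s ^+ 2 / 2%:R)) :> algC.
  by field.
by rewrite mulf_neq0 // pnatr_eq0.
Qed.

Definition Hc n (x : algC) := (map_poly (intr : int -> algC) (Hpoly n)).[x].

Lemma mapX : map_poly (intr : int -> algC) 'X = 'X.
Proof. by rewrite map_polyX. Qed.

Lemma Hc_rec n x : Hc n.+2 x = x * Hc n.+1 x + 2%:R * x * Hc n x + 1 - x ^+ n.+1.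
Proof.
rewrite /Hc Hrec.
rewrite !(rmorphB, rmorphD, rmorphM, rmorph1, rmorph_nat, rmorphXn) /= mapX.
by rewrite !(hornerD, hornerN, hornerM, hornerX, hornerXn, hornerC, hornerMn, hornerMn).
Qed.

Lemma Hc0 x : Hc 0 x = 1.
Proof. by rewrite /Hc H0 rmorph1 hornerC. Qed.

Lemma Hc1 x : Hc 1 x = 1 + x.
Proof. by rewrite /Hc H1 rmorphD rmorph1 /= mapX hornerD hornerC hornerX. Qed.

Lemma hn0 x : 1 - 3%:R * x != 0 ->
  1 = (1 - 3%:R * x)^-1 + 2%:R^-1 * x ^+ 0 + hn 0 x.
Proof.
move=> hx0; rewrite /hn; cbv zeta.
rewrite /chebT /chebU /= hornerC expr0.
by field.
Qed.

Lemma hn1 x : 1 - 3%:R * x != 0 ->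
  1 + x = (1 - 3%:R * x)^-1 + 2%:R^-1 * x ^+ 1 + hn 1 x.
Proof.
move=> hx0; rewrite /hn; cbv zeta.
rewrite /chebT /chebU /= hornerZ hornerX.
set s := sqrtC _ * 'i.
have hs : s ^+ 2 = - (2%:R * x) by rewrite exprMn sqrtCK sqrCi mulrN1.
clearbody s.
have -> : s ^+ 1 / (2%:R * (1 - 3%:R * x)) *
  (8%:R * (- s / 4%:R) - 3%:R * (x + 3%:R) * (2%:R * (- s / 4%:R))) =
  - (s ^+ 2) / (2%:R * (1 - 3%:R * x)) * (2%:R - 3%:R * (x + 3%:R) / 2%:R) by field.
by rewrite hs; field.
Qed.

Theorem mainTheorem6 :
  (* generating function identity of formal power series in y over Q(x):
     den * (sum_n H_n y^n) = num, checked on every truncation *)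
  (forall N k : nat, (k <= N)%N ->
     (gf_den * Hseries N)`_k = gf_num`_k)
  /\
  (* explicit formula, as an identity of rational functions in x,
     checked at every complex point x where it is defined *)
  (forall (n : nat) (x : algC), 1 - 3%:R * x != 0 ->
     (map_poly (intr : int -> algC) (Hpoly n)).[x] =
       (1 - 3%:R * x)^-1 + 2%:R^-1 * x ^+ n + hn n x).
Proof.
split; first exact: part1.
move=> n x hx0.
suff: Hc n x = (1 - 3%:R * x)^-1 + 2%:R^-1 * x ^+ n + hn n x /\
      Hc n.+1 x = (1 - 3%:R * x)^-1 + 2%:R^-1 * x ^+ n.+1 + hn n.+1 x by case.
elim: n => [|n [IH1 IH2]].
  by rewrite Hc0 Hc1 -hn0 // -hn1.
split; first exact: IH2.
rewrite Hc_rec IH1 IH2 hn_rec //.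
set h1 := hn n.+1 x; set h0 := hn n x.
rewrite !exprS; set q := x ^+ n.
by field.
Qed.
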